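(* For every $\varepsilon>0$ the following holds. Let $F$ be a fixed connected $r$-graph and let $D$ be its diameter. For the class consisting of all input $r$-graphs $G$ on $n$ vertices with average degree $d$ and maximum degree $\Delta(G)=O(d)$, there exists an $\varepsilon$-tester for $F$-freeness with $O_\varepsilon(d^{D+1})$ queries.
   Context: A path between $u$ and $v$ in an $r$-graph is a sequence of edges whose vertices admit a labelling $u,v_1,\dots,v_k,v$ with consecutive vertices lying in a common edge and each edge consisting of consecutive vertices; its length is its number of edges. The distance between two vertices is the minimum length of such a path, and the diameter is the maximum distance over vertex pairs. Testing model: the input $r$-graph $G$ with $m$ edges has a fixed ordering of the edges at each vertex; queries are vertex-set queries (is a given $r$-set an edge?) and neighbour queries (the $i$-th edge at vertex $v$). $G$ is $\varepsilon$-far from $F$-free if at least $\varepsilon m$ edges must be added or deleted to make it contain no copy of $F$. A tester accepts $F$-free inputs with probability at least $2/3$ and rejects inputs that are far (w.r.t. the given distance parameter) with probability at least $2/3$; an $\varepsilon$-tester is a tester valid for all distance parameters $\varepsilon'\ge\varepsilon$. $O_\varepsilon$ means the implicit constant may depend on $\varepsilon$ (and $F$) but not on $n$. *)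

(* Defs.v *)
From HB Require Import structures.
From mathcomp Require Import all_boot all_order all_algebra.
From mathcomp Require Import reals.
Set Implicit Arguments.
Unset Strict Implicit.
Unset Printing Implicit Defensive.
Import Order.TTheory GRing.Theory Num.Theory.

Definition is_rgraph (r n : nat) (E : {set {set 'I_n}}) : Prop :=
  forall e, e \in E -> #|e| = r.

Definition vdeg (n : nat) (E : {set {set 'I_n}}) (v : 'I_n) : nat :=
  #|[set e in E | v \in e]|.

Definition contains_copy (k n : nat) (F : {set {set 'I_k}})
    (E : {set {set 'I_n}}) : Prop :=
  exists f : 'I_k -> 'I_n, injective f /\ forall e, e \in F -> f @: e \in E.

Definition F_free (k n : nat) (F : {set {set 'I_k}}) (E : {set {set 'I_n}}) :=
  ~ contains_copy F E.

(* A path of length l from u to v in F: a sequence of l edges of F together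
   with a labelling u = s_0, s_1, ..., s_t = v of (distinct) vertices such that
   each edge of the path is the set of a block of consecutive labels, and any
   two consecutive labels lie in a common edge of the path. *)
Definition hpath (k : nat) (F : {set {set 'I_k}}) (u v : 'I_k) (l : nat) :
    Prop :=
  exists (s : seq 'I_k) (es : seq {set 'I_k}),
    [/\ uniq (u :: s), last u s = v, size es = l,
        (forall e, e \in es -> e \in F) /\
        (forall e, e \in es ->
           exists i j, e = [set x | x \in take j (drop i (u :: s))]) &
        (forall i, i.+1 < size (u :: s) ->
           exists2 e, e \in es &
             (nth u (u :: s) i \in e) && (nth u (u :: s) i.+1 \in e))].

Definition hdist_is (k : nat) (F : {set {set 'I_k}}) (u v : 'I_k) (l : nat) :=
  hpath F u v l /\ forall l', l' < l -> ~ hpath F u v l'.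

Definition hconnected (k : nat) (F : {set {set 'I_k}}) : Prop :=
  forall u v : 'I_k, exists l, hpath F u v l.

Definition is_diameter (k : nat) (F : {set {set 'I_k}}) (D : nat) : Prop :=
  (forall u v : 'I_k, exists2 l, l <= D & hpath F u v l) /\
  (exists u v : 'I_k, hdist_is F u v D).

(* A randomized adaptive query algorithm on inputs with vertex set 'I_n:
   a finite tree whose internal nodes are fair coin flips, vertex-set queries
   ("is S an edge?") and neighbour queries ("the i-th edge at v", answered by
   None if v has at most i edges), and whose leaves are accept/reject. *)
Inductive qtree (n : nat) : Type :=
  | QOut of bool
  | QCoin of (bool -> qtree n)
  | QSet of {set 'I_n} & (bool -> qtree n)
  | QNbr of 'I_n & nat & (option {set 'I_n} -> qtree n).

Fixpoint nqueries (n : nat) (t : qtree n) : nat :=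
  match t with
  | QOut _ => 0
  | QCoin c => maxn (nqueries (c true)) (nqueries (c false))
  | QSet _ c => (maxn (nqueries (c true)) (nqueries (c false))).+1
  | QNbr _ _ c => (\max_(a : option {set 'I_n}) nqueries (c a)).+1
  end.

Definition edge_order (n : nat) (E : {set {set 'I_n}})
    (ord : 'I_n -> seq {set 'I_n}) : Prop :=
  forall v, uniq (ord v) /\ forall e, (e \in ord v) = (e \in E) && (v \in e).

Definition nbr_answer (n : nat) (ord : 'I_n -> seq {set 'I_n}) (v : 'I_n)
    (i : nat) : option {set 'I_n} :=
  if i < size (ord v) then Some (nth set0 (ord v) i) else None.

Fixpoint accept_prob (R : realType) (n : nat) (E : {set {set 'I_n}})
    (ord : 'I_n -> seq {set 'I_n}) (t : qtree n) : R :=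
  match t with
  | QOut b => if b then 1%R else 0%R
  | QCoin c => ((@accept_prob R n E ord (c true) + @accept_prob R n E ord (c false)) / 2)%R
  | QSet A c => @accept_prob R n E ord (c (A \in E))
  | QNbr v i c => @accept_prob R n E ord (c (nbr_answer ord v i))
  end.

Definition avg_degree (R : realType) (r n : nat) (E : {set {set 'I_n}}) : R :=
  ((r * #|E|)%:R / n%:R)%R.

Definition far_from_free (R : realType) (r k n : nat) (F : {set {set 'I_k}})
    (E : {set {set 'I_n}}) (eps : R) : Prop :=
  forall H : {set {set 'I_n}}, is_rgraph r H -> F_free F H ->
    (eps * #|E|%:R <= #|(E :\: H) :|: (H :\: E)|%:R)%R.

(* Main.v *)
Require Import Defs.
From HB Require Import structures.
From mathcomp Require Import all_boot all_order all_algebra.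
From mathcomp Require Import reals.
From mathcomp Require Import lra ring zify.
Import Order.TTheory GRing.Theory Num.Theory.
Module P1.

Section Explore.
Variables (n Dl r : nat).
Local Notation S := {set 'I_n}.

Fixpoint allM {X : Type} (l : seq X) (c : X -> (seq S -> qtree n) -> qtree n)
  (k : seq S -> qtree n) : qtree n :=
  match l with
  | [::] => k [::]
  | x :: l' => c x (fun r1 => allM l' c (fun r2 => k (r1 ++ r2)))
  end.

Fixpoint expl (t : nat) (v : 'I_n) (k : seq S -> qtree n) {struct t} : qtree n :=
  match t with
  | 0 => k [::]
  | t'.+1 => allM (iota 0 Dl) (fun i k1 => QNbr v i (fun a =>
        match a with
        | None => k1 [::]
        | Some e => allM (take r (enum e)) (expl t') (fun es => k1 (e :: es))
        end)) k
  end.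

Fixpoint Qc (t : nat) : nat := if t is t'.+1 then Dl * (1 + r * Qc t') else 0.

Lemma allM_nq (X : Type) (l : seq X) c q :
  (forall x k B, (forall a, nqueries (k a) <= B) -> nqueries (c x k) <= q + B) ->
  forall k B, (forall a, nqueries (k a) <= B) -> nqueries (allM l c k) <= size l * q + B.
Proof.
move=> hc; elim: l => [|x l IH] k B hk /=; first by rewrite hk.
apply: leq_trans (hc _ _ (size l * q + B) _) _; last by rewrite mulSn addnA.
by move=> a; apply: IH.
Qed.

Lemma expl_nq t : forall v k B, (forall a, nqueries (k a) <= B) ->
  nqueries (expl t v k) <= Qc t + B.
Proof.
elim: t => [|t IH] v k B hk /=; first by rewrite hk.
rewrite -[Dl in Dl * _](size_iota 0).
apply: (@allM_nq _ _ _ (1 + r * Qc t)) => // i k1 B1 hk1 /=.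
rewrite add1n ltnS; apply/bigmax_leqP => [[e|]] _ //; last by apply: leq_trans (hk1 _) (leq_addl _ _).
have h := @allM_nq _ (take r (enum e)) (expl t) (Qc t) (fun w k2 B2 hk2 => IH w k2 B2 hk2) (fun es => k1 (e :: es)) B1 (fun a => hk1 _).
apply: leq_trans h _.
by rewrite leq_add2r leq_mul2r size_take_min geq_minl orbT.
Qed.

Variable R : realType.
Variables (E : {set S}) (ord : 'I_n -> seq S).

Fixpoint explV (t : nat) (v : 'I_n) : seq S :=
  match t with
  | 0 => [::]
  | t'.+1 => flatten (map (fun i =>
        match nbr_answer ord v i with
        | None => [::]
        | Some e => e :: flatten (map (explV t') (take r (enum e)))
        end) (iota 0 Dl))
  end.

Lemma allM_ap (X : Type) (l : seq X) c cv :
  (forall x k, accept_prob R E ord (c x k) = accept_prob R E ord (k (cv x))) ->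
  forall k, accept_prob R E ord (allM l c k) =
            accept_prob R E ord (k (flatten (map cv l))).
Proof.
move=> hc; elim: l => [|x l IH] k //=.
by rewrite hc IH.
Qed.

Lemma expl_ap t : forall v k,
  accept_prob R E ord (expl t v k) = accept_prob R E ord (k (explV t v)).
Proof.
elim: t => [|t IH] v k //=.
apply: allM_ap => i k1 /=.
case: (nbr_answer ord v i) => [e|] //.
by apply: allM_ap.
Qed.

End Explore.

End P1.
Import P1.

Module P2.

Section Comb.
Variables (n Dl r : nat) (E : {set {set 'I_n}}) (ord : 'I_n -> seq {set 'I_n}).
Hypothesis hord : edge_order E ord.
Hypothesis hE : is_rgraph r E.
Hypothesis hdeg : forall v, vdeg E v <= Dl.

Local Notation explV := (explV n Dl r ord).

Lemma size_ord v : size (ord v) = vdeg E v.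
Proof.
have [u hm] := hord v.
rewrite /vdeg -(card_uniqP u); apply: eq_card => e.
by rewrite inE hm.
Qed.

Lemma explV_sub t v e : e \in explV t v -> e \in E.
Proof.
elim: t v e => [|t IH] v e //=.
case/flatten_mapP => i _.
rewrite /nbr_answer; case: ifP => // hi.
rewrite inE => /orP [/eqP -> | ].
  have [_ hm] := hord v.
  by move: (mem_nth set0 hi); rewrite hm => /andP[].
by case/flatten_mapP => w _; apply: IH.
Qed.

Lemma explV_mono t v : {subset explV t v <= explV t.+1 v}.
Proof.
elim: t v => [|t IH] v e //=.
case/flatten_mapP => i hi he; apply/flatten_mapP; exists i => //.
move: he; case: (nbr_answer ord v i) => // e'.
rewrite !inE => /orP [-> //| /flatten_mapP [w hw he]].
apply/orP; right; apply/flatten_mapP; exists w => //.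
exact: IH.
Qed.

Lemma explV_mono_le t t' v : t <= t' -> {subset explV t v <= explV t' v}.
Proof.
move/subnKC <-; elim: (t' - t) => [|m IH]; first by rewrite addn0.
by move=> e /IH; rewrite addnS; apply: explV_mono.
Qed.

Lemma nbr_at e v : e \in E -> v \in e ->
  exists2 i, i \in iota 0 Dl & nbr_answer ord v i = Some e.
Proof.
move=> heE hv.
have [_ hm] := hord v.
have ein : e \in ord v by rewrite hm heE.
exists (index e (ord v)).
  rewrite mem_iota add0n /=; apply: leq_trans (hdeg v).
  by rewrite -size_ord index_mem.
by rewrite /nbr_answer index_mem ein nth_index.
Qed.

Lemma explV_at t e v : e \in E -> v \in e -> e \in explV t.+1 v.
Proof.
move=> hee hv; have [i hi ha] := nbr_at e v hee hv.
by apply/flatten_mapP; exists i => //; rewrite ha mem_head.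
Qed.

Lemma explV_step t e v w : e \in E -> v \in e -> w \in e ->
  {subset explV t w <= explV t.+1 v}.
Proof.
move=> hee hv hw x hx; have [i hi ha] := nbr_at e v hee hv.
apply/flatten_mapP; exists i => //; rewrite ha inE; apply/orP; right.
apply/flatten_mapP; exists w => //.
by rewrite take_oversize ?mem_enum // -cardE (hE e hee).
Qed.

End Comb.

End P2.
Import P2.

Module P3.

Section Chain.
Variables (k : nat) (F : {set {set 'I_k}}).

Definition adjF (x y : 'I_k) : bool := [exists e in F, (x \in e) && (y \in e)].

Lemma chain_gen (u : 'I_k) (s : seq 'I_k) : forall m (es : seq {set 'I_k}),
  size es <= m -> {subset es <= F} -> forall j, j <= size s ->
  (forall i, j <= i -> i < size s -> exists2 e, e \in es &
      (nth u (u::s) i \in e) && (nth u (u::s) i.+1 \in e)) ->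
  exists p, [/\ size p <= size es, path adjF (nth u (u::s) j) p &
                last (nth u (u::s) j) p = nth u (u::s) (size s)].
Proof.
elim=> [|m IH] es hsz hF j hj hcov.
  case: (ltnP j (size s)) => hjs.
    have [e he _] := hcov j (leqnn j) hjs.
    by move: hsz; rewrite leqn0 size_eq0 => /eqP hes; rewrite hes in he.
  have -> : j = size s by apply/eqP; rewrite eqn_leq hj hjs.
  by exists [::].
case: (ltnP j (size s)) => hjs; last first.
  have -> : j = size s by apply/eqP; rewrite eqn_leq hj hjs.
  by exists [::].
have [e he /andP [h1 h2]] := hcov j (leqnn j) hjs.
pose P i := (i <= size s) && (nth u (u::s) i \in e).
have exP : exists i, P i by exists j.+1; rewrite /P hjs h2.
have ubP : forall i, P i -> i <= size s by move=> i /andP[].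
case: (ex_maxnP exP ubP) => q /andP [hqs hqe] hmax.
have hjq : j < q by apply: hmax; rewrite /P hjs h2.
have hpos : 0 < size es by case: (es) he.
have hszr : size (rem e es) <= m.
  by rewrite size_rem // -ltnS prednK.
have hFr : {subset rem e es <= F} by move=> x /mem_rem /hF.
have hcov' : forall i, q <= i -> i < size s -> exists2 e0, e0 \in rem e es &
      (nth u (u::s) i \in e0) && (nth u (u::s) i.+1 \in e0).
move=> i hqi his.
  have [e' he' /andP [g1 g2]] := hcov i (leq_trans (ltnW hjq) hqi) his.
  exists e'; last by rewrite g1 g2.
  have : e' \in e :: rem e es by rewrite -(perm_mem (perm_to_rem he)).
  rewrite inE => /orP [/eqP ee|//].
  have : i.+1 <= q by apply: hmax; rewrite /P his -ee g2.
  by rewrite ltnNge hqi.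
have [p' [hp1 hp2 hp3]] := IH _ hszr hFr q hqs hcov'.
exists (nth u (u::s) q :: p'); split => //=.
  rewrite size_rem // in hp1.
  by rewrite /= -(prednK hpos) ltnS.
rewrite hp2 andbT; apply/existsP; exists e.
by rewrite hF // h1 hqe.
Qed.

Lemma hpath_chain u w l : hpath F u w l ->
  exists p, [/\ size p <= l, path adjF u p & last u p = w].
Proof.
case=> s [es [_ hl hsz [hF _] hcov]].
have [p [h1 h2 h3]] := @chain_gen u s (size es) es (leqnn _) hF 0 (leq0n _)
  (fun i _ hi => hcov i hi).
exists p; split => //; first by rewrite -hsz.
by rewrite h3 -hl /= (nth_last u (u :: s)) /=.
Qed.

End Chain.

End P3.
Import P3.

Module P4.
Set Implicit Arguments.
Unset Strict Implicit.

Definition copyb (k n : nat) (F : {set {set 'I_k}}) (G : {set {set 'I_n}}) : bool :=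
  [exists f : {ffun 'I_k -> 'I_n}, injectiveb f && [forall e in F, (f @: e) \in G]].

Lemma copyP (k n : nat) (F : {set {set 'I_k}}) (G : {set {set 'I_n}}) : reflect (contains_copy F G) (copyb F G).
Proof.
apply: (iffP existsP).
  case=> f /andP [/injectiveP hi /forall_inP hf].
  by exists f; split.
case=> f [hi hf]; exists [ffun x => f x]; apply/andP; split.
  by apply/injectiveP => x y; rewrite !ffunE; apply: hi.
apply/forall_inP => e he.
by rewrite (eq_imset _ (ffunE _)) hf.
Qed.

Section Copy.
Variables (n Dl r : nat) (E : {set {set 'I_n}}) (ord : 'I_n -> seq {set 'I_n}).
Hypothesis hord : edge_order E ord.
Hypothesis hE : is_rgraph r E.
Hypothesis hdeg : forall v, vdeg E v <= Dl.
Variables (k : nat) (F : {set {set 'I_k}}) (D : nat).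
Hypothesis hr : 0 < r.
Hypothesis hF : is_rgraph r F.
Hypothesis hD1 : forall u v : 'I_k, exists2 l, l <= D & hpath F u v l.

Local Notation explV := (explV n Dl r ord).

Definition found (v : 'I_n) : {set {set 'I_n}} := [set e | e \in explV D.+1 v].

Lemma walk (f : 'I_k -> 'I_n) : (forall e, e \in F -> f @: e \in E) ->
  forall p u t, path (@adjF k F) u p ->
  {subset explV t (f (last u p)) <= explV (t + size p) (f u)}.
Proof.
move=> hf; elim=> [|y p IH] u t /=; first by move=> x; rewrite addn0.
case/andP => /existsP [e /andP [he /andP [hu hy]]] hp x hx.
rewrite addnS; apply: (@explV_step n Dl r E ord hord hE hdeg _ (f @: e) (f u) (f y)).
- exact: hf.
- exact: imset_f.
- exact: imset_f.
exact: IH.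
Qed.

Lemma copy_found (f : 'I_k -> 'I_n) x0 : injective f ->
  (forall e, e \in F -> f @: e \in E) -> copyb F (found (f x0)).
Proof.
move=> hi hf; apply/copyP; exists f; split => // e he.
rewrite inE.
have : 0 < #|e| by rewrite (hF he).
rewrite card_gt0 => /set0Pn [w hw].
have [l hl hp] := hD1 x0 w.
have [p [hs hpa hla]] := @hpath_chain k F _ _ _ hp.
have h1 : f @: e \in explV 1 (f w).
  by apply: (@explV_at n Dl r E ord hord hdeg 0); [exact: hf | exact: imset_f].
have h0 := walk hf (t:=1) hpa; rewrite hla in h0; have h2 := h0 _ h1.
apply: (@explV_mono_le n Dl r ord _ _ _ _ _ h2).
by rewrite add1n ltnS (leq_trans hs hl).
Qed.

Lemma found_sub v : {subset found v <= E}.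
Proof. by move=> e; rewrite inE; apply: (@explV_sub n Dl r E ord hord). Qed.

End Copy.

End P4.
Import P4.

Module P5.
Set Implicit Arguments.
Unset Strict Implicit.

Fixpoint coins (n N : nat) (k : nat -> qtree n) : qtree n :=
  match N with
  | 0 => k 0
  | N'.+1 => QCoin (fun b : bool => coins N' (fun x => k (x + b * 2 ^ N')))
  end.

Lemma coins_nq n N : forall (k : nat -> qtree n) B, (forall x, nqueries (k x) <= B) ->
  nqueries (coins N k) <= B.
Proof.
elim: N => [|N IH] k B hk //=.
by rewrite geq_max !IH.
Qed.

Local Open Scope ring_scope.

Lemma coins_ap (R : realType) n (E : {set {set 'I_n}}) ord N : forall k,
  accept_prob R E ord (coins N k) =
  (\sum_(0 <= x < 2 ^ N) accept_prob R E ord (k x)) / (2 ^ N)%:R.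
Proof.
elim: N => [|N IH] k /=.
  by rewrite expn0 big_nat1 divr1.
rewrite !IH.
have h2 : (2 ^ N <= 2 ^ N.+1)%N by rewrite expnS mul2n -addnn leq_addr.
rewrite [in RHS](@big_cat_nat _ _ _ (2 ^ N)) //=.
rewrite [X in _ = (_ + X) / _](_ : _ = \sum_(0 <= i < 2 ^ N) accept_prob R E ord (k (i + 2 ^ N)%N)); last first.
  by rewrite -{1}[(2 ^ N)%N]add0n big_addn expnS mul2n -addnn addnK.
under eq_bigr do rewrite mul1n.
under [X in (_ + X / _) / 2 = _]eq_bigr do rewrite mul0n addn0.
rewrite expnS natrM.
have h : (2 ^ N)%:R != 0 :> R by rewrite pnatr_eq0 -lt0n expn_gt0.
field.
by [].
Qed.

End P5.
Import P5.

Module P6.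
Set Implicit Arguments.
Unset Strict Implicit.

Section Trial.
Variables (n Dl r D k : nat) (F : {set {set 'I_k}}) (N : nat).

Definition trial (cont : qtree n) : qtree n :=
  coins N (fun x => oapp (fun v : 'I_n => expl n Dl r D.+1 v
     (fun es => if copyb F [set e | e \in es] then QOut n false else cont))
     cont (insub x)).

Definition rep (s : nat) : qtree n := iter s trial (QOut n true).

Lemma trial_nq c : nqueries (trial c) <= Qc Dl r D.+1 + nqueries c.
Proof.
apply: coins_nq => x; case: (insub x) => [v|] /=; last exact: leq_addl.
apply: (@expl_nq n Dl r D.+1 v _ (nqueries c)) => es; case: ifP => //= _.
Qed.

Lemma rep_nq s : nqueries (rep s) <= s * Qc Dl r D.+1.
Proof.
elim: s => [|s IH] //=.
apply: leq_trans (trial_nq _) _.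
by rewrite mulSn leq_add2l.
Qed.

Lemma count_hit (B : {set 'I_n}) M : n <= M ->
  \sum_(0 <= x < M) (oapp (fun v : 'I_n => v \in B) false (insub x) : nat) = #|B|.
Proof.
move=> hM.
rewrite (@big_cat_nat _ _ _ n) //=.
rewrite [X in _ + X = _]big1_seq ?addn0; last first.
  move=> i /andP [_]; rewrite mem_index_iota => /andP [hi _].
  by rewrite insubF // ltnNge hi.
rewrite big_mkord -sum1_card big_mkcond /=.
rewrite [in RHS]big_mkcond /=.
apply: eq_bigr => i _; rewrite valK /=; by case: (i \in B).
Qed.

Local Open Scope ring_scope.
Variables (R : realType) (E : {set {set 'I_n}}) (ord : 'I_n -> seq {set 'I_n}).

Definition Bset : {set 'I_n} := [set v | copyb F (found Dl r ord D v)].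

Lemma trial_ap c : (n <= 2 ^ N)%N ->
  accept_prob R E ord (trial c) =
  accept_prob R E ord c * (1 - #|Bset|%:R / (2 ^ N)%:R).
Proof.
move=> hn; rewrite coins_ap.
have h : (2 ^ N)%:R != 0 :> R by rewrite pnatr_eq0 -lt0n expn_gt0.
rewrite (eq_bigr (fun x => accept_prob R E ord c -
   accept_prob R E ord c * (oapp (fun v : 'I_n => v \in Bset) false (insub x) : nat)%:R)); last first.
  move=> x _; case: (insub x) => [v|]; cbn [oapp]; last by rewrite mulr0 subr0.
  rewrite expl_ap /Bset inE /found.
  by case: ifP => _ /=; rewrite ?mulr1 ?subrr ?mulr0 ?subr0.
rewrite sumrB -mulr_sumr -natr_sum count_hit // sumr_const_nat subn0.
rewrite mulr_natr; field.
by [].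
Qed.

Lemma rep_ap s : (n <= 2 ^ N)%N ->
  accept_prob R E ord (rep s) = (1 - #|Bset|%:R / (2 ^ N)%:R) ^+ s.
Proof.
move=> hn; elim: s => [|s IH] /=; first by rewrite expr0.
by rewrite trial_ap // -/(rep s) IH exprSr.
Qed.

End Trial.

End P6.
Import P6.

Module P7.
Set Implicit Arguments.
Unset Strict Implicit.

Lemma Qc_bound Dl r t : Qc Dl r t <= t * (Dl * (1 + r)) ^ t.
Proof.
elim: t => [|t IH] //=.
have hD : Dl <= (Dl * (1 + r)) ^ t.+1.
  case: Dl {IH} => [|Dl'] //.
  set a := Dl'.+1 * (1 + r).
  have ha : 1 <= a by rewrite /a muln_gt0.
  apply: leq_trans (_ : a <= _); first by rewrite /a leq_pmulr.
  by rewrite expnS leq_pmulr // expn_gt0.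
move: hD IH; rewrite expnS.
set X := (Dl * (1 + r)) ^ t; set Q := Qc Dl r t => hD IH.
have h1 : Dl * r * Q <= Dl * r * (t * X) by rewrite leq_mul2l IH orbT.
nia.
Qed.

Lemma union_bound n (E : {set {set 'I_n}}) (B : {set 'I_n}) :
  #|[set e in E | ~~ [disjoint e & B]]| <= \sum_(v in B) vdeg E v.
Proof.
rewrite -sum1_card.
apply: (@leq_trans (\sum_(e in [set e in E | ~~ [disjoint e & B]]) \sum_(v in B) (v \in e : nat))).
  apply: leq_sum => e; rewrite inE => /andP [_ /pred0Pn [v /andP [hv hb]]].
  have hv2 : (v \in e) = true by exact: hv.
  by rewrite (bigD1 v) //= hv2.
rewrite exchange_big /=; apply: leq_sum => v _.
rewrite -big_mkcondr /= sum1_card /vdeg.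
apply: subset_leq_card; apply/subsetP => e; rewrite [in X in X -> _]unfold_in inE.
by case/andP => /andP [h1 _] h2; rewrite inE h1 h2.
Qed.

End P7.
Import P7.

Local Open Scope ring_scope.

Lemma bern (R : realType) (q : R) s : 0 <= q -> q <= 1 ->
  (1 - q) ^+ s * (1 + s%:R * q) <= 1.
Proof.
move=> h0 h1; elim: s => [|s IH]; first by rewrite expr0 mul0r addr0 mul1r.
rewrite exprSr -natr1.
have hX : 0 <= (1 - q) ^+ s by apply: exprn_ge0; lra.
set X := (1 - q) ^+ s in IH hX *.
have hs : 0 <= s%:R :> R by [].
have h3 : 0 <= X * (q * q) * (s%:R + 1) by apply: mulr_ge0; [apply: mulr_ge0 => //; nra | lra].
nra.
Qed.

Lemma far_bound (R : realType) (p : R) s : 0 < p -> p <= 1 -> 2 < s%:R * p ->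
  (1 - p) ^+ s <= 1 / 3%:R.
Proof.
move=> h0 h1 h2; have := @bern R p s (ltW h0) h1.
have hX : 0 <= (1 - p) ^+ s by apply: exprn_ge0; lra.
set Y := (1 - p) ^+ s in hX *.
move=> h; rewrite ler_pdivlMr ?ltr0n //.
have : 0 <= Y * (s%:R * p - 2) by apply: mulr_ge0 => //; lra.
have -> : (3%:R : R) = 3 by [].
nra.
Qed.

Theorem proposition4p6 (R : realType) (eps : R) (heps : 0 < eps)
    (r k : nat) (hr : (0 < r)%N) (F : {set {set 'I_k}})
    (hF : is_rgraph r F) (hconn : hconnected F)
    (D : nat) (hD : is_diameter F D)
    (C : R) (hC : 0 < C) :
  exists K : R, 0 < K /\
    forall (n : nat) (d : R), 0 < d ->
      exists T : qtree n,
        (nqueries T)%:R <= K * d ^+ D.+1 /\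
        forall (E : {set {set 'I_n}}) (ord : 'I_n -> seq {set 'I_n}),
          is_rgraph r E -> edge_order E ord ->
          avg_degree R r E = d ->
          (forall v : 'I_n, (vdeg E v)%:R <= C * d) ->
          (F_free F E -> 2%:R / 3%:R <= accept_prob R E ord T) /\
          (forall eps' : R, eps <= eps' -> far_from_free r F E eps' ->
             accept_prob R E ord T <= 1 / 3%:R).
Proof.
case: hD => hD1 [x0 [y0 _]].
have hr' : 0 < r%:R :> R by rewrite ltr0n.
have hCr : 0 < C * r%:R by apply: mulr_gt0.
pose p := eps / (2 * (C * r%:R + eps)).
have hden : 0 < 2 * (C * r%:R + eps) by lra.
have hp0 : 0 < p by apply: divr_gt0.
have hp1 : p <= 1 / 2.
  rewrite /p ler_pdivrMr // mulrA div1r mulVf ?mul1r; first lra.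
  by rewrite pnatr_eq0.
pose s := (Num.truncn (2 / p)).+1.
have hs : 2 < s%:R * p.
  have := truncnS_gt (2 / p); rewrite -/s ltr_pdivrMr //.
pose K := (s * D.+1 * (1 + r) ^ D.+1)%:R * C ^+ D.+1.
exists K; split.
  apply: mulr_gt0; last exact: exprn_gt0.
  by rewrite ltr0n !muln_gt0 expn_gt0.
move=> n d hd.
pose Dl := Num.truncn (C * d).
pose N := (trunc_log 2 n).+1.
have hCd : 0 <= C * d by apply: mulr_ge0; lra.
exists (rep n Dl r D F N s); split.
  apply: (@le_trans _ _ (s * (D.+1 * (Dl * (1 + r)) ^ D.+1))%N%:R).
    rewrite ler_nat; apply: leq_trans (rep_nq _ _ _ _ _ _ _) _.
    by rewrite leq_mul2l Qc_bound orbT.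
  have hDl : (Dl%:R : R) ^+ D.+1 <= (C * d) ^+ D.+1.
    by apply: lerXn2r; rewrite ?nnegrE // /Dl truncn_le.
  rewrite /K expnMn !mulnA !natrM !natrX.
  set A := (s%:R * D.+1%:R : R).
  set B := ((1 + r)%:R ^+ D.+1 : R).
  have hA : 0 <= A by apply: mulr_ge0.
  rewrite exprMn in hDl.
  have hB : 0 <= B by apply: exprn_ge0.
  have : 0 <= A * B * (C ^+ D.+1 * d ^+ D.+1 - (Dl%:R : R) ^+ D.+1).
    by apply: mulr_ge0; [apply: mulr_ge0 | lra].
  nra.
move=> E ord hE hord havg hdegC.
have hdeg : forall v, (vdeg E v <= Dl)%N.
  by move=> v; rewrite /Dl truncn_ge_nat.
have hN : (n <= 2 ^ N)%N by apply: ltnW; apply: trunc_log_ltn.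
rewrite rep_ap //.
set b := #|Bset Dl r D F ord|.
split.
  move=> hfree.
  have -> : b = 0%N.
    apply/eqP; rewrite cards_eq0; apply/eqP; apply/setP => v.
    rewrite inE in_set0; apply/negbTE/negP => /copyP [f [hi hf]].
    apply: hfree; exists f; split => // e he.
    exact: (found_sub hord (hf e he)).
  rewrite mul0r subr0 expr1n.
  rewrite ler_pdivrMr ?ltr0n // mul1r ler_nat //.
move=> eps' heps' hfar.
have hn : (0 < n)%N.
  case: (posnP n) => [n0|//].
  have hn0 : (n%:R : R) = 0 by rewrite n0.
  by move: havg; rewrite /avg_degree hn0 invr0 mulr0 => hd0; move: hd; rewrite -hd0 ltxx.
have hm : (0 < #|E|)%N.
  rewrite lt0n; apply/negP => /eqP hm0.
  by move: havg; rewrite /avg_degree hm0 muln0 mul0r => hd0; move: hd; rewrite -hd0 ltxx.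
have hN2 : (2 ^ N <= 2 * n)%N.
  by rewrite /N expnS leq_mul2l /=; apply: trunc_logP.
have hbn : (b <= n)%N by rewrite /b -[X in (_ <= X)%N]card_ord max_card.
have hNr : 0 < (2 ^ N)%N%:R :> R by rewrite ltr0n expn_gt0.
have hnr : 0 < n%:R :> R by rewrite ltr0n.
have hN2r : (2 ^ N)%N%:R <= 2 * n%:R :> R by rewrite -natrM ler_nat.
have hbnr : b%:R <= n%:R :> R by rewrite ler_nat.
have hnNr : n%:R <= (2 ^ N)%N%:R :> R by rewrite ler_nat.
have hb : p * (2 ^ N)%N%:R <= b%:R :> R.
  have hpN : p * (2 ^ N)%N%:R <= p * (2 * n%:R) by rewrite ler_wpM2l // ltW.
  apply: le_trans hpN _.
  have [hA|hB] := boolP [exists e0 in F, x0 \in e0].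
    move/existsP: hA => [e0 /andP [he0 hx0]].
    pose H := [set e in E | [disjoint e & Bset Dl r D F ord]].
    have hH : is_rgraph r H.
      by move=> e; rewrite inE => /andP [he _]; exact: hE e he.
    have hHfree : F_free F H.
      case=> g [gi gf].
      have gE : forall e, e \in F -> g @: e \in E.
        by move=> e he; have := gf e he; rewrite inE => /andP [].
      have hc := copy_found hord hE hdeg hr hF hD1 x0 gi gE.
      have hgB : g x0 \in Bset Dl r D F ord by rewrite inE.
      have := gf e0 he0; rewrite inE => /andP [_ hdis].
      by rewrite (disjointFr hdis (imset_f g hx0)) in hgB.
    have := hfar H hH hHfree.
    have -> : (E :\: H) :|: (H :\: E) =
        [set e in E | ~~ [disjoint e & Bset Dl r D F ord]].
      apply/setP => e; rewrite !inE.
      by case: (e \in E); case: [disjoint _ & _].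
    move=> hfar2.
    have hcnt := union_bound E (Bset Dl r D F ord).
    have hsum : (\sum_(v in Bset Dl r D F ord) vdeg E v <= b * Dl)%N.
      rewrite /b -sum_nat_const; apply: leq_sum => v _; exact: hdeg.
    have h1 : eps' * #|E|%:R <= b%:R * (C * d).
      apply: le_trans hfar2 _.
      apply: (@le_trans _ _ (b * Dl)%N%:R).
        by rewrite ler_nat (leq_trans hcnt hsum).
      by rewrite natrM ler_wpM2l // /Dl truncn_le.
    have hm0 : 0 < #|E|%:R :> R by rewrite ltr0n.
    have h2 : eps * #|E|%:R <= b%:R * (C * d).
      apply: le_trans h1; rewrite ler_wpM2r //; exact: ltW.
    have hdn : d * n%:R = r%:R * #|E|%:R.
      by rewrite -havg /avg_degree natrM mulfVK // gt_eqF.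
    have key : eps * n%:R <= b%:R * (C * r%:R).
      have h3 : eps * #|E|%:R * n%:R <= b%:R * (C * d) * n%:R.
        by rewrite ler_wpM2r // ltW.
      have e1 : b%:R * (C * d) * n%:R = b%:R * (C * r%:R) * #|E|%:R.
        transitivity (b%:R * C * (d * n%:R)); first by ring.
        by rewrite hdn; ring.
      rewrite e1 in h3.
      have h4 : (eps * n%:R - b%:R * (C * r%:R)) * #|E|%:R <= 0.
        by rewrite mulrBl; lra.
      by move: h4; rewrite pmulr_lle0 // subr_le0.
    have hb0 : 0 <= b%:R :> R by [].
    have hX : 0 < C * r%:R + eps by lra.
    have e2 : eps / (2 * (C * r%:R + eps)) * (2 * n%:R) = (eps * n%:R) / (C * r%:R + eps).
      by field; rewrite gt_eqF.
    rewrite /p e2 ler_pdivrMr //.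
    have : 0 <= b%:R * eps by apply: mulr_ge0 => //; exact: ltW.
    lra.
  have hall : forall y : 'I_k, y = x0.
    move=> y; have [l _ hp] := hD1 x0 y; case: hp => s0 [es [_ hl _ [hF' _] hcov]].
    case: s0 hl hcov => [|z s0] hl hcov; first by rewrite -hl.
    have [e he /andP [h1 _]] := hcov 0%N isT.
    by move/negP: hB; case; apply/existsP; exists e; rewrite hF' // h1.
  have hbn' : b = n.
    rewrite /b -[n in RHS]card_ord; apply: eq_card => v; rewrite inE.
    apply/copyP; exists (fun _ => v); split.
      by move=> a c _; rewrite (hall a) (hall c).
    move=> e he; exfalso.
    have : (0 < #|e|)%N by rewrite (hF e he).
    rewrite card_gt0 => /set0Pn [y hy].
    rewrite (hall y) in hy.
    by move/negP: hB; apply; apply/existsP; exists e; rewrite he hy.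
  rewrite hbn' mulrA.
  have : p * 2 <= 1 by lra.
  nra.
have hbeta : p <= b%:R / (2 ^ N)%N%:R :> R by rewrite ler_pdivlMr.
have hbeta1 : b%:R / (2 ^ N)%N%:R <= 1 :> R by rewrite ler_pdivrMr // mul1r; lra.
apply: le_trans (@far_bound R p s hp0 _ hs); last by lra.
apply: lerXn2r; rewrite ?nnegrE; lra.
Qed.
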